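(* Let $R$ be a Noetherian ring and let $N \subsetneq M$ be finitely generated $R$-modules with $\operatorname{Ass}(M/N)=\{P_1,P_2,\dots,P_s\}$ (the $P_i$ distinct). Suppose that for each $i=1,2,\dots,s$, $Q_i$ is a $P_i$-primary component of $N$ in $M$, i.e. $Q_i\in\Lambda_{P_i}(N\subsetneq M)$. Then $N=Q_1\cap Q_2\cap\cdots\cap Q_s$, and this is an irredundant and minimal primary decomposition of $N$ in $M$.
   Context: A submodule $Q\subseteq M$ is $P$-primary if $\operatorname{Ass}(M/Q)=\{P\}$. A primary decomposition of $N$ in $M$ means an irredundant and minimal primary decomposition $N=Q_1\cap\cdots\cap Q_s$ with $Q_i$ being $P_i$-primary, the $P_i$ distinct; then $\operatorname{Ass}(M/N)=\{P_1,\dots,P_s\}$ and $Q_i$ is called a $P_i$-primary component of $N$ in $M$. For $P\in\operatorname{Ass}(M/N)$, $\Lambda_P(N\subsetneq M)$ denotes the set of all $P$-primary submodules $Q$ of $M$ that occur as the $P$-primary component in some (irredundant, minimal) primary decomposition of $N$ in $M$. *)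

(* Defs.v *)
From HB Require Import structures.
From mathcomp Require Import all_boot all_order all_algebra.
From mathcomp Require Import boolp classical_sets.
Set Implicit Arguments. Unset Strict Implicit. Unset Printing Implicit Defensive.
Import GRing.Theory.
Local Open Scope ring_scope.
Local Open Scope classical_set_scope.

Section Defs.
Variable R : comNzRingType.

Definition ideal (I : set R) : Prop :=
  [/\ I 0, (forall x y, I x -> I y -> I (x + y)) & (forall r x, I x -> I (r * x))].

Definition prime_ideal (P : set R) : Prop :=
  [/\ ideal P, ~ P 1 & (forall a b, P (a * b) -> P a \/ P b)].

Definition noetherian_ring : Prop :=
  forall I : set R, ideal I ->
    exists (n : nat) (g : 'I_n -> R),
      I = [set x | exists c : 'I_n -> R, x = \sum_(i < n) c i * g i].

Variable M : lmodType R.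

Definition submodule (N : set M) : Prop :=
  [/\ N 0, (forall x y, N x -> N y -> N (x + y)) & (forall r x, N x -> N (r *: x))].

(* a finitely generated submodule (A = setT : M itself is finitely generated) *)
Definition fg_submodule (A : set M) : Prop :=
  exists (n : nat) (g : 'I_n -> M),
    A = [set x | exists c : 'I_n -> R, x = \sum_(i < n) c i *: g i].

(* (N :_R m) = annihilator of the class of m in M/N *)
Definition colon (N : set M) (m : M) : set R := [set r | N (r *: m)].

(* Ass(M/N) *)
Definition Ass (N : set M) : set (set R) :=
  [set P | prime_ideal P /\ exists m : M, P = colon N m].

Definition primary_sub (P : set R) (Q : set M) : Prop :=
  submodule Q /\ Ass Q = [set P].

Definition primary_decomposition (N : set M) (s : nat)
    (Q : 'I_s -> set M) (P : 'I_s -> set R) : Prop :=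
  [/\ forall i, primary_sub (P i) (Q i),
      injective P,
      N = \bigcap_(i in [set: 'I_s]) Q i
    & forall i, \bigcap_(j in [set j | j != i]) Q j <> N].

Definition Lambda (P : set R) (N : set M) : set (set M) :=
  [set Q | exists (s : nat) (Q' : 'I_s -> set M) (P' : 'I_s -> set R),
      primary_decomposition N Q' P' /\ exists i, P' i = P /\ Q' i = Q].

End Defs.

(* Main.v *)
Require Import Defs.
From HB Require Import structures.
From mathcomp Require Import all_boot all_order all_algebra.
From mathcomp Require Import boolp classical_sets.
Local Open Scope ring_scope.
Local Open Scope classical_set_scope.
Import GRing.Theory.

Section Aux.
Variables (R : comNzRingType) (M : lmodType R).

Lemma colon_ideal (N : set M) m : submodule N -> ideal (colon N m).
Proof.
case=> N0 ND NZ; split; rewrite /colon /=.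
- by rewrite scale0r.
- by move=> a b Ha Hb; rewrite scalerDl; exact: ND.
- by move=> r a Ha; rewrite -scalerA; exact: NZ.
Qed.

Lemma prod_notin (Pr : set R) t (a : 'I_t -> R) :
  prime_ideal Pr -> (forall j, ~ Pr (a j)) -> ~ Pr (\prod_(j < t) a j).
Proof.
case=> _ P1 Pm Ha.
apply: (big_ind (fun x => ~ Pr x)) => // x y Hx Hy /Pm [] //.
Qed.

Lemma sumI (J : set R) : ideal J -> forall t (c g : 'I_t -> R),
  (forall i, J (g i)) -> J (\sum_(i < t) c i * g i).
Proof.
case=> J0 JD JZ t c g Hg.
elim/big_rec: _ => // i y _ Hy; apply: JD => //; exact: JZ.
Qed.

Lemma key t (Qf : 'I_t -> set M) (Pf : 'I_t -> set R) (S : 'I_t -> Prop)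
  (y : M) (Pr : set R) :
  prime_ideal Pr -> (forall j, primary_sub (Pf j) (Qf j)) ->
  (forall r, Pr r <-> forall j, S j -> Qf j (r *: y)) ->
  exists j, [/\ S j, ~ Qf j y & Pf j = Pr].
Proof.
move=> Hpr Hprim Heq.
apply: contrapT => Hno.
have Ha : forall j, exists a, ~ Pr a /\ (S j -> Qf j (a *: y)).
  move=> j; case: (EM (S j)) => Sj; last first.
    by exists 1; split => //; case: Hpr.
  case: (EM (Qf j y)) => Qy.
    by exists 1; split; [case: Hpr | rewrite scale1r].
  apply: contrapT => Hn; apply: Hno; exists j; split => //.
  have sub : colon (Qf j) y `<=` Pr.
    move=> a Ha; apply: contrapT => nPa; apply: Hn; exists a; split => //.
  have eq : colon (Qf j) y = Pr.
    apply/seteqP; split => // a /Heq H; exact: H j Sj.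
  have [_ HA] := Hprim j.
  have : Ass (Qf j) Pr by split => //; exists y; rewrite eq.
  by rewrite HA => ->.
have [a Hafun] := choice Ha.
have : Pr (\prod_(j < t) a j).
  apply/Heq => j Sj.
  rewrite (bigD1 j) //= mulrC -scalerA.
  have [[_ _ QZ] _] := Hprim j.
  apply: QZ; exact: (Hafun j).2.
apply: prod_notin => // j; exact: (Hafun j).1.
Qed.

Lemma exists_ass (N : set M) x : noetherian_ring R -> submodule N -> ~ N x ->
  exists r, ~ N (r *: x) /\ prime_ideal (colon N (r *: x)).
Proof.
move=> Hnoe Hsub Nx.
have [N0 ND NZ] := Hsub.
have Hmax : exists r, ~ N (r *: x) /\ forall r', ~ N (r' *: x) ->
    colon N (r *: x) `<=` colon N (r' *: x) -> colon N (r' *: x) `<=` colon N (r *: x).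
  apply: contrapT => Hn.
  have Hs : forall r, exists r', ~ N (r *: x) -> [/\ ~ N (r' *: x),
      colon N (r *: x) `<=` colon N (r' *: x) &
      exists a, colon N (r' *: x) a /\ ~ colon N (r *: x) a].
    move=> r; case: (EM (N (r *: x))) => Hr; first by exists r.
    apply: contrapT => H2; apply: Hn; exists r; split => // r' Hr' Hs a Ha.
    apply: contrapT => Hna; apply: H2; exists r' => _; split => //.
    by exists a.
  have [f Hf] := choice Hs.
  pose sr n := iter n f 1.
  have Hseq : forall n, ~ N (sr n *: x).
    elim=> [|n IH]; first by rewrite /sr /= scale1r.
    by have [] := Hf (sr n) IH.
  pose I n := colon N (sr n *: x).
  have Istep : forall n, I n `<=` I n.+1 /\ exists a, I n.+1 a /\ ~ I n a.
    move=> n; have [_ H1 H2] := Hf (sr n) (Hseq n); split => //.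
  have mono : forall n k, I n `<=` I (n + k)%N.
    move=> n; elim=> [|k IH]; first by rewrite addn0.
    rewrite addnS => z Hz; apply: (Istep _).1; exact: IH.
  have monol : forall n m, (n <= m)%N -> I n `<=` I m.
    by move=> n m /subnKC <-; apply: mono.
  pose U := [set a | exists n, I n a].
  have Uid : ideal U.
    split.
    - exists 0%N; rewrite /I /colon /= scale0r //.
    - move=> a b [n Ha] [m Hb]; exists (n + m)%N.
      have [_ D _] := colon_ideal N (sr (n + m)%N *: x) Hsub.
      apply: D; first exact: mono.
      by rewrite addnC; apply: mono.
    - move=> r a [n Ha]; exists n.
      have [_ _ Z] := colon_ideal N (sr n *: x) Hsub; exact: Z.
  have [k [g HU]] := Hnoe U Uid.
  have gU : forall i, U (g i).
    move=> i; rewrite HU; exists (fun j => if j == i then 1 else 0).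
    rewrite (bigD1 i) //= eqxx mul1r big1 ?addr0 // => j /negbTE ->.
    by rewrite mul0r.
  have [nf Hnf] := choice gU.
  pose N1 := (\max_(i < k) nf i)%N.
  have gI : forall i, I N1 (g i).
    move=> i; apply: (monol (nf i)); last exact: Hnf.
    rewrite /N1; exact: (@leq_bigmax _ nf i).
  have UI : U `<=` I N1.
    rewrite HU => z [c ->].
    exact: (@sumI (I N1) (colon_ideal N (sr N1 *: x) Hsub) k c g gI).
  have [_ [a [Ha nHa]]] := Istep N1.
  exact: (nHa (UI a (ex_intro _ N1.+1 Ha))).
have [r [Nr Hm]] := Hmax.
exists r; split => //.
split; first exact: colon_ideal.
  by rewrite /colon /= scale1r.
move=> a b Hab.
case: (EM (colon N (r *: x) a)) => Ha; first by left.
right.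
have Har : ~ N ((a * r) *: x) by rewrite -scalerA.
have sub : colon N (r *: x) `<=` colon N ((a * r) *: x).
  move=> c Hc; rewrite /colon /=.
  have -> : c *: ((a * r) *: x) = a *: (c *: (r *: x)) by rewrite !scalerA mulrCA mulrA.
  by apply: NZ.
apply: (Hm _ Har sub).
rewrite /colon /=.
have -> : b *: ((a * r) *: x) = (a * b) *: (r *: x) by rewrite !scalerA mulrCA mulrA.
exact: Hab.
Qed.

End Aux.
Arguments exists_ass {R M N x}.
Arguments key {R M t Qf Pf S y Pr}.

Theorem theorem1p1 (R : comNzRingType) (M : lmodType R) (N : set M)
    (s : nat) (P : 'I_s -> set R) (Q : 'I_s -> set M) :
  noetherian_ring R ->
  fg_submodule [set: M] ->
  submodule N -> fg_submodule N -> N <> [set: M] ->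
  injective P ->
  Ass N = P @` [set: 'I_s] ->
  (forall i, Lambda (P i) N (Q i)) ->
  N = \bigcap_(i in [set: 'I_s]) Q i /\ primary_decomposition N Q P.
Proof.
move=> Hnoe _ Hsub _ HNT Pinj HAss HL.
have Hprim : forall i, primary_sub (P i) (Q i).
  move=> i; have [t [Q' [P' [[Hp _ _ _] [j [Pj Qj]]]]]] := HL i.
  by rewrite -Pj -Qj.
have Heq : N = \bigcap_(i in [set: 'I_s]) Q i.
  apply/seteqP; split.
    move=> z Nz i _.
    have [t [Q' [P' [[_ _ Heq' _] [j [_ Qj]]]]]] := HL i.
    by rewrite -Qj; move: Nz; rewrite Heq'; apply.
  move=> z Hz; apply: contrapT => Nz.
  have [r [Nr Pr]] := exists_ass Hnoe Hsub Nz.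
  have : Ass N (colon N (r *: z)) by split => //; exists (r *: z).
  rewrite HAss => -[k _ Pk].
  have [t [Q' [P' [[Hp Pinj' Heq' _] [k' [Pk' Qk']]]]]] := HL k.
  have Hc : forall a, colon N (r *: z) a <-> forall j, True -> Q' j (a *: (r *: z)).
    move=> a; rewrite /colon /= {1}Heq'; split => [H j _|H j _]; exact: H.
  have [j [_ nQ PjE]] := key Pr Hp Hc.
  have jk : j = k' by apply: Pinj'; rewrite PjE -Pk Pk'.
  apply: nQ; rewrite jk Qk'.
  have [[_ _ QZ] _] := Hprim k.
  by apply: QZ; apply: Hz.
split => //; split => //.
move=> i Hi.
have : Ass N (P i) by rewrite HAss; exists i.
case=> Ppr [m Pm].
have Hc : forall a, P i a <-> forall j, (j != i) -> Q j (a *: m).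
  move=> a; rewrite Pm /colon /= -{1}Hi; split => [H j Hj|H j Hj]; exact: H.
have [j [ji _ Pji]] := key Ppr Hprim Hc.
by move/negP: ji; apply; apply/eqP; apply: Pinj.
Qed.
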